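(* Fix nonnegative integers $s,t$, integers $\tilde\lambda_1\ge\tilde\lambda_2\ge\cdots\ge\tilde\lambda_s\ge0$, and nonnegative integers $\epsilon_1,\dots,\epsilon_t$. For an integer $k\ge\max(s,t)$ set $\tilde\lambda_j=0$ for $s<j\le k$, $\epsilon_j=0$ for $t<j\le k$, and $c_j=k+j-1-\epsilon_j$ for $1\le j\le k$. Then $$\det\bigl((c_i)_{\tilde\lambda_j+k-j}\bigr)_{1\le i,j\le k}=(-1)^{k(k-1)/2}\,\Delta(c)\cdot Q(k),$$ where $Q$ is a polynomial in $k$ (depending on the fixed data) of degree at most $2\sum_i\tilde\lambda_i$.
   Context: $(z)_\mu=z(z-1)\cdots(z-\mu+1)$ denotes the descending factorial (with $(z)_0=1$), and $\Delta(c)=\prod_{1\le i<j\le k}(c_j-c_i)$. *)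

(* Defs.v *)
From mathcomp Require Import all_boot all_order all_algebra.
Set Implicit Arguments. Unset Strict Implicit. Unset Printing Implicit Defensive.
Import Order.TTheory GRing.Theory Num.Theory.
Local Open Scope ring_scope.

Definition ffact (R : comRingType) (z : R) (mu : nat) : R :=
  \prod_(i < mu) (z - i%:R).

(* c_j = k + j - 1 - eps_j  (1-based j); here 0-based: c_j = k + j - eps_j,
   with eps_j = 0 beyond the given list *)
Definition cvec (eps : seq nat) (k : nat) (j : 'I_k) : rat :=
  (k + j)%:R - (nth 0%N eps j)%:R.

(* the k x k matrix ((c_i)_{lam_j + k - j}) (1-based), lam_j = 0 beyond list *)
Definition ffmat (lam eps : seq nat) (k : nat) : 'M[rat]_k :=
  \matrix_(i < k, j < k) ffact (cvec eps i) (nth 0%N lam j + (k - j.+1))%N.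

Definition Delta (k : nat) (c : 'I_k -> rat) : rat :=
  \prod_(i < k) \prod_(j < k | (i < j)%N) (c j - c i).

(* Main.v *)
Require Import Defs.
From mathcomp Require Import all_boot all_order all_algebra.
From mathcomp Require Import perm ring zify.
Set Implicit Arguments. Unset Strict Implicit. Unset Printing Implicit Defensive.
Import Order.TTheory GRing.Theory Num.Theory.
Local Open Scope ring_scope.
Section FF.
Variable R : comRingType.

Lemma ffact0 (z : R) : ffact z 0 = 1.
Proof. by rewrite /ffact big_ord0. Qed.

Lemma ffactS (z : R) m : ffact z m.+1 = ffact z m * (z - m%:R).
Proof. by rewrite /ffact big_ord_recr. Qed.

Lemma ffactD (a b : R) m :
  ffact (a + b) m = \sum_(0 <= e < m.+1) ('C(m, e))%:R * ffact a (m - e) * ffact b e.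
Proof.
elim: m => [|m IH].
  by rewrite big_nat1 !ffact0 bin0 !mulr1.
rewrite ffactS IH big_distrl /=.
have E1 : \sum_(0 <= e < m.+1) 'C(m, e)%:R * ffact a (m - e) * ffact b e * (a + b - m%:R)
  = \sum_(0 <= e < m.+1) 'C(m, e)%:R * ffact a (m.+1 - e) * ffact b e
    + \sum_(0 <= e < m.+1) 'C(m, e)%:R * ffact a (m - e) * ffact b e.+1.
  rewrite -big_split /=; apply: eq_big_nat => e /andP [_ he].
  rewrite subSn // !ffactS.
  have -> : (m%:R : R) = (m - e)%N%:R + e%:R by rewrite -natrD subnK.
  ring.
rewrite E1 [in RHS]big_nat_recl // bin0 subn0.
under [in RHS]eq_big_nat => e _ do rewrite binS natrD !mulrDl.
rewrite big_split /= addrA; congr (_ + _).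
rewrite [in LHS]big_nat_recl // bin0 subn0; congr (_ + _).
rewrite [in RHS]big_nat_recr //= bin_small // mul0r mul0r addr0.
by apply: eq_big_nat => e /andP [_ he]; rewrite subSS.
Qed.

Lemma ffact_nat n m : ffact (n%:R : R) m = (n ^_ m)%:R.
Proof.
elim: m => [|m IH]; first by rewrite ffact0.
rewrite ffactS IH ffactnSr natrM.
case: (leqP m n) => h; first by rewrite natrB.
by rewrite ffact_small ?mul0r.
Qed.

Lemma horner_ffactX (x : R) m : (ffact ('X : {poly R}) m).[x] = ffact x m.
Proof.
rewrite /ffact horner_prod; apply: eq_bigr => i _.
by rewrite !hornerE hornerMn hornerE.
Qed.

End FF.

Section Newton.
Variable F : fieldType.
Variable p : nat -> F.
Definition Wp (l : nat) : {poly F} := \prod_(0 <= r < l) ('X - (p r)%:P).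

Lemma size_Wp l : size (Wp l) = l.+1.
Proof. by rewrite /Wp size_prod_XsubC size_iota subn0. Qed.

Lemma monic_Wp l : Wp l \is monic.
Proof. exact: monic_prod_XsubC. Qed.

Lemma WpS l : Wp l.+1 = Wp l * ('X - (p l)%:P).
Proof. by rewrite /Wp big_nat_recr. Qed.

Lemma newton (f : {poly F}) n :
  f = \sum_(0 <= l < n) (f %/ Wp l).[p l] *: Wp l + (f %/ Wp n) * Wp n.
Proof.
elim: n => [|n IH].
  by rewrite big_nil add0r /Wp big_nil divp1 mulr1.
rewrite {1}IH big_nat_recr //= -addrA; congr (_ + _).
rewrite WpS -divp_divl.
set g := f %/ Wp n.
rewrite {1}(divp_eq g ('X - (p n)%:P)) modp_XsubC mulrDl addrC -mul_polyC.
congr (_ + _).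
by rewrite -mulrA [_ * Wp n]mulrC.
Qed.

Lemma Wp_quot_small (f : {poly F}) l : (size f <= l)%N -> f %/ Wp l = 0.
Proof. by move=> h; rewrite divp_small // size_Wp ltnS. Qed.

Lemma quot_monic_eq (f g : {poly F}) : f \is monic -> g \is monic ->
  size f = size g -> f %/ g = 1.
Proof.
move=> mf mg hs.
have gn0 : g != 0 by rewrite monic_neq0.
have -> : f = 1 * g + (f - g) by rewrite mul1r addrC subrK.
rewrite divp_addl_mul_small //.
have sg : (0 < size g)%N by rewrite size_poly_gt0.
apply: (@leq_ltn_trans (size g).-1); last by rewrite prednK.
apply/leq_sizeP => j hj.
rewrite coefB.
case: (ltngtP j (size g).-1) => h.
- by move: hj; rewrite leqNgt h.
- have hj' : (size g <= j)%N by rewrite -(prednK sg).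
  by rewrite !nth_default ?hs ?subrr.
- move/monicP: mf; move/monicP: mg; rewrite /lead_coef -hs h => lg lf.
  by rewrite -hs lf lg subrr.
Qed.

Lemma Wp_quot_top (f : {poly F}) l : f \is monic -> size f = l.+1 ->
  f %/ Wp l = 1.
Proof.
by move=> mf hs; apply: quot_monic_eq => //; rewrite ?monic_Wp ?size_Wp.
Qed.


Lemma Wp_root k x : (exists2 r, (r < k)%N & p r = x) -> (Wp k).[x] = 0.
Proof.
case=> r hr hx; rewrite /Wp horner_prod; apply/eqP.
rewrite prodf_seq_eq0; apply/hasP; exists r; first by rewrite mem_index_iota.
by rewrite !hornerE hx subrr.
Qed.

Lemma newton_mx k (c : 'I_k -> F) (f : 'I_k -> {poly F}) :
  (forall i : 'I_k, exists2 r, (r < k)%N & p r = c i) ->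
  \matrix_(i, j) (f j).[c i] =
  (\matrix_(i, l) (Wp l).[c i]) *m (\matrix_(l < k, j < k) ((f j) %/ Wp l).[p l]).
Proof.
move=> hc; apply/matrixP => i j; rewrite !mxE.
rewrite {1}(newton (f j) k) hornerD hornerM Wp_root // mulr0 addr0.
rewrite horner_sum big_mkord; apply: eq_bigr => l _.
by rewrite hornerZ !mxE mulrC.
Qed.

Lemma det_newton k (c : 'I_k -> F) (f : 'I_k -> {poly F}) :
  (forall i : 'I_k, exists2 r, (r < k)%N & p r = c i) ->
  \det (\matrix_(i, j) (f j).[c i]) =
  (\prod_(i < k) \prod_(j < k | (i < j)%N) (c j - c i)) *
  \det (\matrix_(l < k, j < k) ((f j) %/ Wp l).[p l]).
Proof.
move=> hc.
rewrite newton_mx // det_mulmx; congr (_ * _).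
have HV : \det (\matrix_(i, j) ('X^j : {poly F}).[c i]) =
    \prod_(i < k) \prod_(j < k | (i < j)%N) (c j - c i).
  rewrite -det_tr.
  have -> : (\matrix_(i, j) ('X^j : {poly F}).[c i])^T = Vandermonde k (\row_j c j).
    by apply/matrixP => i j; rewrite !mxE hornerXn.
  rewrite det_Vandermonde; apply: eq_bigr => i _; apply: eq_bigr => j _.
  by rewrite !mxE.
rewrite -HV (newton_mx (fun j : 'I_k => 'X^j) hc) det_mulmx.
rewrite -[X in _ = _ * X]det_tr [X in _ = _ * X]det_trig ?big1 ?mulr1 //.
  move=> i _; rewrite !mxE Wp_quot_top ?monicXn ?size_polyXn //.
  by rewrite hornerC.
apply/is_trig_mxP => i j hij; rewrite !mxE Wp_quot_small ?horner0 //.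
by rewrite size_polyXn.
Qed.

End Newton.

Lemma ffact_split (R : comRingType) (z : R) n e :
  ffact z (n + e) = ffact z n * ffact (z - n%:R) e.
Proof.
elim: e => [|e IH]; first by rewrite addn0 ffact0 mulr1.
rewrite addnS !ffactS IH natrD; ring.
Qed.

Lemma ffact_polyC (R : comRingType) (c : R) m : ffact (c%:P) m = (ffact c m)%:P.
Proof.
rewrite /ffact rmorph_prod; apply: eq_bigr => i _.
by rewrite rmorphB /= polyC_natr.
Qed.

Lemma ffact_XsubC (R : comRingType) (c : R) e :
  ffact ('X - c%:P) e = \prod_(i < e) ('X - (c + i%:R)%:P).
Proof.
by apply: eq_bigr => i _; rewrite polyCD polyC_natr opprD addrA.
Qed.

Lemma size_ffact_XsubC (R : idomainType) (c : R) e :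
  size (ffact ('X - c%:P) e) = e.+1.
Proof.
by rewrite ffact_XsubC -(big_mkord xpredT (fun i => 'X - (c + i%:R)%:P)) size_prod_XsubC size_iota subn0.
Qed.

Lemma horner_ffact_XsubC (R : comRingType) (c : R) e :
  (ffact ('X - c%:P) e).[c] = (e == 0)%:R.
Proof.
case: e => [|e]; first by rewrite ffact0 hornerC.
rewrite /ffact horner_prod big_ord_recl /= !hornerE subrr sub0r oppr0 mul0r.
done.
Qed.

Lemma cons_div (F : fieldType) (X : F) n m : (n <= m)%N ->
  ffact 'X m %/ \prod_(0 <= r < n) ('X - (X + r%:R)%:P) =
  \sum_(0 <= e < (m - n).+1)
     ('C(m, n + e)%:R * ffact X (m - n - e)) *: ffact ('X - (X + n%:R)%:P) e.
Proof.
move=> hnm.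
have Ep : \prod_(0 <= r < n) ('X - (X + r%:R)%:P) = ffact ('X - X%:P) n.
  by rewrite ffact_XsubC big_mkord.
have E1 : ffact ('X : {poly F}) m =
    \sum_(0 <= e < m.+1) ('C(m, e)%:R * ffact X (m - e)) *: ffact ('X - X%:P) e.
  rewrite -{1}['X](subrK (X%:P)) addrC ffactD; apply: eq_bigr => e _.
  by rewrite ffact_polyC -mul_polyC rmorphM /= polyC_natr.
rewrite Ep E1 (@big_cat_nat _ _ _ n 0 m.+1) /= //; last by apply: leq_trans hnm _.
rewrite -[in X in _ + X](add0n n) big_addn subSn //.
have E2 : \sum_(0 <= i < (m - n).+1)
    ('C(m, i + n)%:R * ffact X (m - (i + n))) *: ffact ('X - X%:P) (i + n) =
    ffact ('X - X%:P) n * \sum_(0 <= e < (m - n).+1)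
     ('C(m, n + e)%:R * ffact X (m - n - e)) *: ffact ('X - (X + n%:R)%:P) e.
  rewrite big_distrr /=; apply: eq_bigr => e _.
  rewrite addnC ffact_split scalerAr subnDA; congr (_ * (_ *: ffact _ _)).
  by rewrite polyCD polyC_natr opprD addrA.
rewrite E2 addrC mulrC divp_addl_mul_small // size_ffact_XsubC ltnS big_seq_cond.
apply: (big_ind (fun q : {poly F} => (size q <= n)%N)).
- by rewrite size_poly0.
- move=> x y hx hy; apply: leq_trans (size_polyD _ _) _; by rewrite geq_max hx hy.
move=> e /andP [he _]; rewrite mem_index_iota in he.
apply: leq_trans (size_scale_leq _ _) _.
by rewrite size_ffact_XsubC.
Qed.

Lemma det_peel (R : comRingType) s p (A : 'M[R]_(p + s)) :
  (forall l c : 'I_(p + s), (s <= c)%N -> (p + s <= (l + c).+1)%N ->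
      A l c = ((l + c).+1 == p + s)%:R) ->
  \det A = (-1) ^+ (\sum_(s <= i < p + s) i) *
    \det (\matrix_(r < s, j < s) A (rshift p r) (widen_ord (leq_addl p s) j)).
Proof.
elim: p A => [|p IH] A hA.
  rewrite big_geq // expr0 mul1r; congr (\det _).
  by apply/matrixP => i j; rewrite mxE; congr (A _ _); apply: val_inj.
have Hl0 : forall i : 'I_(p + s), (lift ord0 i : nat) = i.+1 by move=> i; rewrite lift0.
rewrite (expand_det_col A ord_max) big_ord_recl big1 ?addr0; last first.
  move=> i _; rewrite hA.
  - have -> : (((lift ord0 i : nat) + (p + s)).+1 == p.+1 + s) = false.
      by rewrite Hl0; apply/negbTE; lia.
    by rewrite mul0r.
  - change (s <= p + s)%N; lia.
  - change (p.+1 + s <= ((lift ord0 i : nat) + (p + s)).+1)%N; rewrite Hl0; lia.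
rewrite hA; last 2 first.
- change (s <= p + s)%N; lia.
- change (p.+1 + s <= (0 + (p + s)).+1)%N; lia.
have -> : ((0 + (p + s)).+1 == p.+1 + s) by [].
rewrite mul1r /cofactor.
have Hlm : forall j : 'I_(p + s), (lift ord_max j : nat) = j.
  by move=> j; rewrite /= /bump leqNgt ltn_ord.
rewrite (IH (row' ord0 (col' ord_max A))); last first.
  move=> l c hc hlc; rewrite !mxE hA.
  - by rewrite Hl0 Hlm.
  - by rewrite Hlm.
  - by rewrite Hl0 Hlm; change (p.+1 + s <= (l.+1 + c).+1)%N; lia.
rewrite mulrA -exprD; congr (_ * _).
  congr (_ ^+ _); rewrite (big_nat_recr (p + s) s) /=; last by lia.
  by rewrite addnC.
congr (\det _).
apply/matrixP => i j; rewrite !mxE; congr (A _ _); apply: val_inj => /=.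
  by rewrite /bump /=.
exact: (Hlm (widen_ord (leq_addl p s) j)).
Qed.

Lemma size_det_col (R : idomainType) s (A : 'M[{poly R}]_s) (d : 'I_s -> nat) :
  (forall i j, (size (A i j) <= (d j).+1)%N) -> (size (\det A) <= (\sum_j d j).+1)%N.
Proof.
move=> hA; rewrite /determinant.
apply: (big_ind (fun q : {poly R} => (size q <= _)%N)).
- by rewrite size_poly0.
- move=> x y hx hy; apply: leq_trans (size_polyD _ _) _; by rewrite geq_max hx hy.
move=> σ0 _; pose σ := (σ0 : {perm 'I_s}); rewrite size_Msign.
have: (size (\prod_i A i (σ i))%R <= (\sum_i d (σ i)).+1)%N.
  elim/big_rec2: _ => [|i n q _ hq]; first by rewrite size_poly1.
  apply: leq_trans (size_polyMleq _ _) _; have := hA i (σ i); lia.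
move=> h; apply: leq_trans h _; rewrite [X in (_ <= X.+1)%N](reindex_inj (@perm_inj _ σ)) /=. exact: leqnn.
Qed.

Lemma size_det_rowcol (R : idomainType) s (A : 'M[{poly R}]_s) (a : 'I_s -> nat) :
  (forall i j : 'I_s, A i j = 0 \/ (size (A i j) + (i : nat).*2 <= (a j).*2.+1)%N) ->
  \det A = 0 \/ (size (\det A) + \sum_(i < s) (i : nat).*2 <= (\sum_j (a j).*2).+1)%N.
Proof.
move=> hA.
have HA' := @size_det_col R s (\matrix_(i, j) (A i j * 'X^((i : nat).*2))) (fun j => (a j).*2).
have E : \matrix_(i, j) (A i j * 'X^((i : nat).*2)) =
    diag_mx (\row_(i < s) ('X^((i : nat).*2) : {poly R})) *m A.
  by apply/matrixP => i j; rewrite mul_diag_mx !mxE mulrC.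
rewrite E det_mulmx det_diag in HA'.
have EP : \prod_(i < s) (\row_(i0 < s) ('X^((i0 : nat).*2) : {poly R})) 0 i =
   'X^(\sum_(i < s) (i : nat).*2).
  by rewrite -prodrXr; apply: eq_bigr => i _; rewrite mxE.
rewrite EP in HA'.
case: (eqVneq (\det A) 0) => hd; [by left | right].
rewrite addnC -size_mulXn // mulrC; apply: HA' => i j; rewrite mul_diag_mx !mxE mulrC.
case: (hA i j) => [->|h]; first by rewrite mul0r size_poly0.
case: (eqVneq (A i j) 0) => [->|hn]; first by rewrite mul0r size_poly0.
by rewrite size_mulXn // addnC.
Qed.

Notation PR := {poly rat}.
Notation BR := {poly {poly rat}}.

Definition Wt (d : nat) (g : BR) := forall i, (size (g`_i)%R <= d.+1 - i.*2)%N.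

Lemma Wt_mono d d' g : (d <= d')%N -> Wt d g -> Wt d' g.
Proof. by move=> h hg i; apply: leq_trans (hg i) _; lia. Qed.

Lemma Wt0 d : Wt d 0.
Proof. by move=> i; rewrite coef0 size_poly0. Qed.

Lemma WtD d g h : Wt d g -> Wt d h -> Wt d (g + h).
Proof.
move=> hg hh i; rewrite coefD; apply: leq_trans (size_polyD _ _) _.
by rewrite geq_max hg hh.
Qed.

Lemma Wt_sum d m n (F : nat -> BR) : (forall i, Wt d (F i)) ->
  Wt d (\sum_(m <= i < n) F i).
Proof.
move=> hF; apply: (big_ind (Wt d)); [exact: Wt0 | exact: WtD | by move=> i _].
Qed.

Lemma WtC d (a : PR) : (size a <= d.+1)%N -> Wt d a%:P.
Proof. by move=> ha [|i]; rewrite coefC //= size_poly0. Qed.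

Lemma WtM d1 d2 g h : Wt d1 g -> Wt d2 h -> Wt (d1 + d2) (g * h).
Proof.
move=> hg hh i; rewrite coefM.
apply: (big_ind (fun q : PR => (size q <= _)%N)).
- by rewrite size_poly0.
- move=> x y hx hy; apply: leq_trans (size_polyD _ _) _; by rewrite geq_max hx hy.
move=> j _.
case: (eqVneq g`_j 0) => [->|gn]; first by rewrite mul0r size_poly0.
case: (eqVneq h`_(i - j) 0) => [->|hn]; first by rewrite mulr0 size_poly0.
have hj := hg j; have hij := hh (i - j)%N.
have p1 : (0 < size (g`_j)%R)%N by rewrite size_poly_gt0.
have p2 : (0 < size (h`_(i - j))%R)%N by rewrite size_poly_gt0.
have ji : (j <= i)%N by have := ltn_ord j; lia.
apply: leq_trans (size_polyMleq _ _) _; lia.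
Qed.

Lemma WtXsubC (w : PR) : (size w <= 2)%N -> Wt 2 ('X - w%:P).
Proof.
move=> hw [|[|i]]; rewrite coefB coefX coefC /=.
- by rewrite sub0r size_polyN; apply: leq_trans hw _.
- by rewrite subr0 size_poly1.
- by rewrite subr0 size_poly0.
Qed.

Lemma Wt_ffact (w : PR) e : (size w <= 2)%N -> Wt (e.*2) (ffact ('X - w%:P) e).
Proof.
move=> hw; elim: e => [|e IH].
  by rewrite /ffact big_ord0; apply: WtC; rewrite size_poly1.
rewrite /ffact big_ord_recr /= -/(ffact _ e) doubleS -addn2.
apply: WtM => //.
rewrite -polyC_natr -addrA -opprD -polyCD; apply: WtXsubC.
apply: leq_trans (size_polyD _ _) _; rewrite geq_max hw /=.
by rewrite -polyC_natr; apply: leq_trans (size_polyC_leq1 _) _.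
Qed.

Lemma Wt_quot d (g q : BR) (w c : PR) : (size w <= 2)%N -> Wt d.+2 g ->
  g = q * ('X - w%:P) + c%:P -> Wt d q.
Proof.
move=> hw hg E.
have rel : forall i, q`_i = g`_i.+1 + q`_i.+1 * w.
  move=> i; rewrite E coefD coefC /= addr0 mulrBr coefB coefMX coefMC /=.
  by rewrite subrK.
suff H : forall n i, (size q <= i + n)%N -> (size (q`_i)%R <= d.+1 - i.*2)%N.
  by move=> i; apply: (H (size q)); lia.
elim=> [|n IH] i hi.
  by rewrite nth_default ?size_poly0 // -(addn0 i).
rewrite rel; apply: leq_trans (size_polyD _ _) _; rewrite geq_max; apply/andP; split.
  by apply: leq_trans (hg _) _; lia.
case: (eqVneq q`_i.+1 0) => [->|qn]; first by rewrite mul0r size_poly0.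
have h1 := IH i.+1 (ltac:(lia)).
have p1 : (0 < size (q`_i.+1)%R)%N by rewrite size_poly_gt0.
apply: leq_trans (size_polyMleq _ _) _; lia.
Qed.

Lemma ar_horner a b d i : (0 < a)%N -> (a <= d.+1 - i.*2)%N -> (b <= i.+1)%N ->
  ((a + b).-1 <= d.+1)%N.
Proof. lia. Qed.

Lemma Wt_horner d (g : BR) (w : PR) : (size w <= 2)%N -> Wt d g ->
  (size g.[w] <= d.+1)%N.
Proof.
move=> hw hg; rewrite horner_coef.
apply: (big_ind (fun q : PR => (size q <= _)%N)).
- by rewrite size_poly0.
- move=> x y hx hy; apply: leq_trans (size_polyD _ _) _; by rewrite geq_max hx hy.
move=> [i hi] _ /=.
case: (eqVneq g`_i 0) => [->|gn]; first by rewrite mul0r size_poly0.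
have p1 : (0 < size (g`_i)%R)%N by rewrite size_poly_gt0.
have h1 := hg i.
have h2 : (size (w ^+ i) <= i.+1)%N.
  apply: leq_trans (size_poly_exp_leq _ _) _; rewrite ltnS.
  have h : ((size w).-1 <= 1)%N by lia.
  by rewrite -{2}(mul1n i) leq_mul2r h orbT.
apply: leq_trans (size_polyMleq _ _) _; exact: (ar_horner p1 h1 h2).
Qed.

Lemma ffactX_eq (R : comRingType) m : ffact ('X : {poly R}) m = ffact ('X - 0%:P) m.
Proof. by rewrite polyC0 subr0. Qed.

Lemma monic_ffactX (R : comRingType) m : ffact ('X : {poly R}) m \is monic.
Proof. by rewrite ffactX_eq ffact_XsubC monic_prod_XsubC. Qed.

Lemma size_ffactX (R : idomainType) m : size (ffact ('X : {poly R}) m) = m.+1.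
Proof. by rewrite ffactX_eq size_ffact_XsubC. Qed.

Lemma horner_ffact_lin (R : comRingType) (c x : R) q :
  (ffact ('X + c%:P) q).[x] = ffact (x + c) q.
Proof.
rewrite /ffact horner_prod; apply: eq_bigr => i _.
by rewrite !hornerE hornerMn hornerE.
Qed.

Lemma size_ffact_lin (R : idomainType) (c : R) q : size (ffact ('X + c%:P) q) = q.+1.
Proof. by rewrite -[c]opprK polyCN size_ffact_XsubC. Qed.

Lemma binr m n : (n <= m)%N ->
  ('C(m, n)%:R : rat) = ((m - n)`!%:R)^-1 * ffact (m%:R) (m - n).
Proof.
move=> h; rewrite -bin_sub // ffact_nat -bin_ffact natrM. rewrite mulrC -mulrA mulfV ?mulr1 //.
by rewrite pnatr_eq0 -lt0n fact_gt0.
Qed.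

Lemma rmorph_ffact (R S : comRingType) (f : {rmorphism R -> S}) z e :
  f (ffact z e) = ffact (f z) e.
Proof.
rewrite /ffact rmorph_prod; apply: eq_bigr => i _.
by rewrite rmorphB rmorph_nat.
Qed.

Definition phi (x : rat) (g : BR) : PR := map_poly (horner_eval x) g.

Lemma phiC x (c : PR) : phi x c%:P = (c.[x])%:P.
Proof. by rewrite /phi map_polyC. Qed.

Lemma phi_XsubC x (c : PR) : phi x ('X - c%:P) = 'X - (c.[x])%:P.
Proof. by rewrite /phi map_polyXsubC. Qed.

Lemma phiD x g h : phi x (g + h) = phi x g + phi x h.
Proof. by rewrite /phi rmorphD. Qed.

Lemma phiM x g h : phi x (g * h) = phi x g * phi x h.
Proof. by rewrite /phi rmorphM. Qed.

Lemma phi_sum x m n (F : nat -> BR) :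
  phi x (\sum_(m <= i < n) F i) = \sum_(m <= i < n) phi x (F i).
Proof. by rewrite /phi rmorph_sum. Qed.

Lemma phi_ffact x (w : PR) e : phi x (ffact ('X - w%:P) e) = ffact ('X - (w.[x])%:P) e.
Proof. rewrite /phi rmorph_ffact; congr ffact; exact: map_polyXsubC. Qed.

Lemma horner_phi x (g : BR) (w : PR) : (phi x g).[w.[x]] = (g.[w]).[x].
Proof. by rewrite /phi -[w.[x]]/(horner_eval x w) horner_map. Qed.

Section Main.
Variables lam eps : seq nat.
Local Notation s := (size lam).
Local Notation t := (size eps).

Definition cf (k i : nat) : rat := (k + i)%:R - (nth 0%N eps i)%:R.
Definition pt (k r : nat) : rat :=
  if (r < k - t)%N then cf k (r + t) else cf k (r - (k - t)).
Definition fpoly (k j : nat) : {poly rat} := ffact 'X (nth 0%N lam j + (k - j.+1)).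
Definition Dent k l j := (fpoly k j %/ Wp (pt k) l).[pt k l].

Lemma pt_cover k (i : 'I_k) : (t <= k)%N ->
  exists2 r, (r < k)%N & pt k r = cvec eps i.
Proof.
move=> htk; have hi := ltn_ord i.
case: (leqP t i) => h.
  exists (i - t)%N; first by lia.
  by rewrite /pt ifT ?subnK // /cvec /cf; lia.
exists (k - t + i)%N; first by lia.
rewrite /pt ifF; last by apply/negbTE; lia.
by rewrite /cvec /cf addKn.
Qed.

Lemma det_step1 k : (t <= k)%N ->
  \det (ffmat lam eps k) = Delta (cvec eps (k:=k)) * \det (\matrix_(l < k, j < k) Dent k l j).
Proof.
move=> htk.
have -> : ffmat lam eps k = \matrix_(i, j) (fpoly k j).[cvec eps i].
  by apply/matrixP => i j; rewrite !mxE /fpoly horner_ffactX.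
have := (@det_newton _ (pt k) k (cvec eps (k:=k)) (fun j : 'I_k => fpoly k j) (fun i => @pt_cover k i htk)).
move=> ->; congr (_ * \det _); apply/matrixP => l j; rewrite !mxE.
Qed.

Lemma det_step2 p' : (t <= p' + s)%N ->
  \det (\matrix_(l < p' + s, j < p' + s) Dent (p' + s) l j) =
  (-1) ^+ (\sum_(s <= i < p' + s) i) *
     \det (\matrix_(r < s, j < s) Dent (p' + s) (p' + r) j).
Proof.
move=> ht.
rewrite det_peel; last first.
  move=> l c hc hlc; rewrite mxE /Dent /fpoly nth_default // add0n.
  case: eqP => he.
    rewrite Wp_quot_top ?monic_ffactX ?size_ffactX ?hornerC //.
    have := ltn_ord c; lia.
  rewrite Wp_quot_small ?horner0 // size_ffactX.
  have := ltn_ord c; lia.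
congr (_ * \det _); apply/matrixP => r j; rewrite !mxE.
done.
Qed.

Lemma Wp_cons k n : (n <= k - t)%N ->
  Wp (pt k) n = \prod_(0 <= r < n) ('X - ((k + t)%:R + r%:R)%:P).
Proof.
move=> h; apply: eq_big_nat => r /andP [_ hr].
rewrite /pt ifT; last by lia.
rewrite /cf nth_default; last by lia.
by rewrite subr0 -natrD addnCA addnC.
Qed.

Lemma pt_cons k n : (n < k - t)%N -> pt k n = (k + t)%:R + n%:R.
Proof.
move=> h; rewrite /pt ifT // /cf nth_default; last by lia.
by rewrite subr0 -natrD addnCA addnC.
Qed.

Lemma horner_cons (X : rat) n m x : (n <= m)%N ->
  (\sum_(0 <= e < (m - n).+1)
     ('C(m, n + e)%:R * ffact X (m - n - e)) *: ffact ('X - (X + n%:R)%:P) e).[x] =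
  \sum_(0 <= e < (m - n).+1)
     ('C(m, n + e)%:R * ffact X (m - n - e)) * (ffact ('X - (X + n%:R)%:P) e).[x].
Proof. by move=> _; rewrite horner_sum; apply: eq_bigr => e _; rewrite hornerZ. Qed.

Definition PA r j : {poly rat} :=
  let q := (nth 0%N lam j + (s - j.+1) - r)%N in
  ((q`!)%:R)^-1 *: (ffact ('X + ((nth 0%N lam j)%:R - (j.+1)%:R)%:P) q *
                    ffact ('X + (t%:R)%:P) q).

Lemma DentA p' r j : (j < s)%N -> (r <= nth 0%N lam j + (s - j.+1))%N -> (r + t < s)%N ->
  Dent (p' + s) (p' + r) j = (PA r j).[(p' + s)%:R].
Proof.
move=> hj hr hrt.
set a := (nth 0%N lam j + (s - j.+1))%N.
have hm : (nth 0%N lam j + (p' + s - j.+1) = p' + a)%N by rewrite /a; lia.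
rewrite /Dent /fpoly hm Wp_cons; last by lia.
rewrite cons_div; last by lia.
rewrite pt_cons; last by lia.
rewrite horner_cons; last by lia.
rewrite big_nat_recl // big1 ?addr0; last first.
  by move=> e _; rewrite horner_ffact_XsubC mulr0.
rewrite addn0 subn0 horner_ffact_XsubC mulr1.
rewrite /PA -/a hornerZ hornerM !horner_ffact_lin.
have -> : (p' + a - (p' + r) = a - r)%N by lia.
rewrite binr; last by lia.
have -> : (p' + a - (p' + r) = a - r)%N by lia.
rewrite -mulrA; congr (_ * (ffact _ _ * ffact _ _)).
  rewrite /a -hm natrD natrB; last by lia.
  by rewrite natrD; ring.
by rewrite natrD.
Qed.

Definition qB j := (nth 0%N lam j + (s - j.+1) + t - s)%N.

Definition ce j e : PR :=
  (((qB j - e)`!)%:R)^-1 *: (ffact ('X + ((nth 0%N lam j)%:R - (j.+1)%:R)%:P) (qB j - e) *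
                              ffact ('X + (t%:R)%:P) (qB j - e)).

Definition G0 j : BR :=
  \sum_(0 <= e < (qB j).+1) (ce j e)%:P * ffact ('X - ('X *+ 2 : PR)%:P) e.

Lemma phi_G0 p' j : (j < s)%N -> (s <= nth 0%N lam j + (s - j.+1) + t)%N ->
  (t <= p' + s)%N ->
  phi (p' + s)%:R (G0 j) = fpoly (p' + s) j %/ Wp (pt (p' + s)) (p' + s - t).
Proof.
move=> hj hat ht.
set a := (nth 0%N lam j + (s - j.+1))%N.
have hm : (nth 0%N lam j + (p' + s - j.+1) = p' + a)%N by rewrite /a; lia.
rewrite /fpoly hm Wp_cons // cons_div; last by rewrite /a; lia.
have hq : (p' + a - (p' + s - t) = qB j)%N by rewrite /qB -/a; lia.
rewrite hq /G0 phi_sum; apply: eq_big_nat => e /andP [_ he].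
rewrite phiM phiC phi_ffact -mul_polyC; congr (_%:P * ffact ('X - _%:P) e).
  rewrite binr; last by lia.
  have -> : (p' + a - (p' + s - t + e) = qB j - e)%N by lia.
  rewrite /ce hornerZ hornerM !horner_ffact_lin mulrA; congr (_ * _ * ffact _ _).
    congr ffact; rewrite /a !natrD natrB //; ring.
  by rewrite -natrD.
rewrite !hornerE -!natrD.
congr _%:R; lia.
Qed.

Lemma Wt_sum_nat d m n (F : nat -> BR) :
  (forall i, (m <= i < n)%N -> Wt d (F i)) -> Wt d (\sum_(m <= i < n) F i).
Proof.
move=> hF; rewrite big_seq_cond.
apply: (big_ind (Wt d)); [exact: Wt0 | exact: WtD |].
by move=> i /andP [hi _]; apply: hF; rewrite mem_index_iota in hi.
Qed.

Lemma size_X2 : (size ('X *+ 2 : PR) <= 2)%N.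
Proof. by rewrite mulr2n; apply: leq_trans (size_polyD _ _) _; rewrite size_polyX. Qed.

Lemma size_ce j e : (size (ce j e) <= (qB j - e).*2.+1)%N.
Proof.
rewrite /ce; apply: leq_trans (size_scale_leq _ _) _.
apply: leq_trans (size_polyMleq _ _) _; rewrite !size_ffact_lin; lia.
Qed.

Lemma Wt_G0 j : Wt (qB j).*2 (G0 j).
Proof.
apply: Wt_sum_nat => e /andP [_ he].
apply: (@Wt_mono ((qB j - e).*2 + e.*2)); first by lia.
apply: WtM; first by apply: WtC; exact: size_ce.
by apply: Wt_ffact; exact: size_X2.
Qed.

Definition Yp n : PR := 'X + (n%:R - (nth 0%N eps n)%:R)%:P.

Lemma Yp_eval k n : (Yp n).[k%:R] = cf k n.
Proof. by rewrite /Yp hornerD hornerX hornerC /cf natrD addrA. Qed.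

Lemma size_Yp n : (size (Yp n) <= 2)%N.
Proof. by rewrite /Yp size_XaddC. Qed.

Lemma pt_spec k n : (n < t)%N -> (t <= k)%N -> pt k (k - t + n) = cf k n.
Proof. by move=> hn hk; rewrite /pt ifF ?addKn //; apply/negbTE; lia. Qed.

Lemma iterB r j : (j < s)%N -> (r <= nth 0%N lam j + (s - j.+1))%N -> (s <= r + t)%N ->
  (r < s)%N -> forall n, (n <= r + t - s)%N ->
  exists G : BR, Wt ((qB j - n)%N.*2) G /\
    forall p', (t <= p' + s)%N ->
      phi (p' + s)%:R G = fpoly (p' + s) j %/ Wp (pt (p' + s)) (p' + s - t + n).
Proof.
move=> hj hr hrt hrs; elim=> [|n IH] hn.
  exists (G0 j); split; first by rewrite subn0; exact: Wt_G0.
  move=> p' ht; rewrite addn0 phi_G0 //; lia.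
have [G [WG EG]] := IH (ltnW hn).
have [G' EG'] : exists G', G - (G.[Yp n])%:P = G' * ('X - (Yp n)%:P).
  by apply/factor_theorem; rewrite /root hornerD hornerN hornerC subrr.
have EG2 : G = G' * ('X - (Yp n)%:P) + (G.[Yp n])%:P by rewrite -EG' subrK.
exists G'; split.
  apply: (Wt_quot (size_Yp n) _ EG2).
  have -> : ((qB j - n.+1).*2).+2 = (qB j - n).*2 by rewrite /qB; lia.
  exact: WG.
move=> p' ht; rewrite addnS WpS -divp_divl -(EG p' ht) EG2.
rewrite phiD phiM phiC phi_XsubC Yp_eval pt_spec; last 2 first.
- lia.
- lia.
rewrite divp_addl_mul_small // size_XsubC; apply: leq_ltn_trans (size_polyC_leq1 _) _.
done.
Qed.

Lemma size_PA r j : (size (PA r j) <= (nth 0%N lam j + (s - j.+1) - r).*2.+1)%N.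
Proof.
rewrite /PA; apply: leq_trans (size_scale_leq _ _) _.
apply: leq_trans (size_polyMleq _ _) _; rewrite !size_ffact_lin; lia.
Qed.

Lemma entry r j : (r < s)%N -> (j < s)%N ->
  exists P : PR, (P = 0 \/ (size P + r.*2 <= (nth 0%N lam j + (s - j.+1)).*2.+1)%N) /\
    forall p', (t <= p' + s)%N -> Dent (p' + s) (p' + r) j = P.[(p' + s)%:R].
Proof.
move=> hrs hj.
set a := (nth 0%N lam j + (s - j.+1))%N.
have hm : forall p', (nth 0%N lam j + (p' + s - j.+1) = p' + a)%N by move=> p'; rewrite /a; lia.
case: (ltnP a r) => har.
  exists 0; split; first by left.
  move=> p' ht; rewrite horner0 /Dent /fpoly hm Wp_quot_small ?horner0 //.
  by rewrite size_ffactX; lia.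
case: (ltnP (r + t) s) => hrt.
  exists (PA r j); split.
    by right; have := size_PA r j; rewrite -/a; lia.
  by move=> p' ht; exact: DentA.
have [G [WG EG]] := iterB hj har hrt hrs (leqnn _).
exists (G.[Yp (r + t - s)]); split.
  by right; move: (Wt_horner (size_Yp (r + t - s)) WG); rewrite /qB -/a; lia.
move=> p' ht; rewrite /Dent.
have -> : (p' + r = p' + s - t + (r + t - s))%N by lia.
rewrite -EG // pt_spec; last 2 first.
- lia.
- lia.
by rewrite -Yp_eval horner_phi.
Qed.

End Main.

Lemma sum_double n (f : 'I_n -> nat) : (\sum_(i < n) (f i).*2 = (\sum_(i < n) f i).*2)%N.
Proof.
elim: n f => [|n IH] f; first by rewrite !big_ord0.
by rewrite !big_ord_recr /= IH doubleD.
Qed.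

Lemma sum_a (lam : seq nat) :
  (\sum_(j < size lam) (nth 0%N lam j + (size lam - j.+1)) =
   sumn lam + \sum_(i < size lam) i)%N.
Proof.
rewrite big_split /=; congr (_ + _)%N.
  by rewrite sumnE (big_nth 0%N) big_mkord.
rewrite (reindex_inj rev_ord_inj) /=; apply: eq_bigr => i _.
have := ltn_ord i; lia.
Qed.

Lemma sign_split p' s :
  ((\sum_(s <= i < p' + s) i) + s * (s - 1) %/ 2 = (p' + s) * (p' + s - 1) %/ 2)%N.
Proof.
rewrite !divn2 !subn1 -!bin2 -!bin2_sum addnC.
by rewrite -(@big_cat_nat _ _ _ s 0 (p' + s)) //; lia.
Qed.

Theorem theorem4 (lam eps : seq nat) :
  sorted geq lam ->
  exists Q : {poly rat},
    (size Q <= (2 * sumn lam).+1)%N /\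
    forall k : nat, (maxn (size lam) (size eps) <= k)%N ->
      \det (ffmat lam eps k) =
        (-1) ^+ (k * (k - 1) %/ 2) * Delta (cvec eps (k:=k)) * Q.[k%:R].
Proof.
move=> _.
set s := size lam; set t := size eps.
pose a (j : 'I_s) := (nth 0%N lam j + (s - j.+1))%N.
have hE : forall rj : 'I_s * 'I_s, exists P : PR,
    (P = 0 \/ (size P + (rj.1 : nat).*2 <= (a rj.2).*2.+1)%N) /\
    forall p', (t <= p' + s)%N -> Dent lam eps (p' + s) (p' + rj.1) rj.2 = P.[(p' + s)%:R].
  by move=> [r j] /=; exact: (@entry lam eps r j (ltn_ord r) (ltn_ord j)).
have [Pf HP] := fin_all_exists hE.
pose M := \matrix_(r < s, j < s) Pf (r, j).
exists ((-1) ^+ (s * (s - 1) %/ 2) *: \det M); split.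
  apply: leq_trans (size_scale_leq _ _) _.
  have := @size_det_rowcol _ s M a.
  case.
  - by move=> r j; rewrite mxE; case: (HP (r, j)) => -[->|h] _; [left | right].
  - by move=> ->; rewrite size_poly0.
  rewrite !sum_double /a sum_a doubleD -/s -!muln2.
  move: (size _) (sumn lam) (\sum_(i < s) i)%N => x y z; lia.
move=> k hk.
have hsk : (s <= k)%N by apply: leq_trans hk; apply: leq_maxl.
have htk : (t <= k)%N by apply: leq_trans hk; apply: leq_maxr.
have [p' Ek] : exists p', k = (p' + s)%N by exists (k - s)%N; rewrite subnK.
rewrite Ek in htk *.
rewrite det_step1 // det_step2 //.
have -> : \matrix_(r < s, j < s) Dent lam eps (p' + s) (p' + r) j =
    map_mx (horner_eval (p' + s)%:R) M.
  apply/matrixP => r j; rewrite !mxE.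
  by case: (HP (r, j)) => _ ->; last by lia.
rewrite det_map_mx hornerZ -(sign_split p' s) exprD.
rewrite /horner_eval /=.
have hS : forall n, (-1) ^+ n * (-1) ^+ n = 1 :> rat.
  by move=> n; rewrite -exprD -signr_odd addnn odd_double.
set S := (-1) ^+ (s * (s - 1) %/ 2) : rat.
set E := (-1) ^+ (\sum_(s <= i < p' + s) i) : rat.
rewrite horner_evalE; set X := (\det M).[_].
set D := Delta _.
have -> : E * S * D * (S * X) = (S * S) * (D * (E * X)) by ring.
by rewrite hS mul1r.
Qed.
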